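(* Let $i\in\mathbb{N}$ be fixed and let $G\in\mathcal{G}_{k,n,p}$. For all $v,w\in V(G)$, \[ \mathbb{P}_w[X_i=v]=\frac{\mathcal{W}_i(w,v)}{\mathcal{W}_i(w)}\pm\mathcal{O}\!\left(\frac{\sqrt{\log n}}{p^{3/2}n^{3/2}}\right). \]
   Context: Fix an integer $k\ge2$ and let $p=p(n)$ satisfy $\frac{\log n}{n^{(k-1)/k}}\le p\le 1-\Omega(\frac{\log^4 n}{n})$. $\mathcal{G}_{k,n,p}$ denotes the set of graphs $G$ on $n$ vertices satisfying: (i) $G$ is not bipartite; (ii) $\operatorname{diam}(G)\le k$; (iii) every vertex has degree $d(v)=pn\pm\mathcal{O}(\sqrt{pn\log n})$; (iv) $2|E(G)|=pn^2\pm\mathcal{O}(\sqrt{pn^2\log n})$; (v) $|N(v)\cap N(w)|=p^2n\pm\mathcal{O}(\max\{\sqrt{p^2n\log n},\log n\})$ for all $v\ne w$; (vi) the unit eigenvector $\phi$ of the largest adjacency eigenvalue has entries $\phi_i=\frac1{\sqrt n}\pm\mathcal{O}(\frac{\log^{3/2}n}{\sqrt p\,n\log(pn)})$; (vii) $\lambda_1=(1+o(1))pn$; (viii) $\max\{|\lambda_2|,|\lambda_n|\}=\mathcal{O}(\sqrt{pn})$, where $\lambda_1\ge\dots\ge\lambda_n$ are the adjacency eigenvalues. Asymptotic notation is as $n\to\infty$ with constants independent of $n$. $X$ is a simple random walk on $G$ and $\mathbb{P}_w[\cdot]=\mathbb{P}[\cdot\mid X_0=w]$. $\mathcal{W}_i(w)$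 is the number of walks of length $i$ starting at $w$ and $\mathcal{W}_i(w,v)$ the number of walks of length $i$ from $w$ to $v$. *)

(* Defs.v *)
From HB Require Import structures.
From mathcomp Require Import all_boot all_order all_algebra.
From mathcomp Require Import all_classical all_reals all_analysis.
Set Implicit Arguments. Unset Strict Implicit. Unset Printing Implicit Defensive.
Import Order.TTheory GRing.Theory Num.Theory.
Local Open Scope ring_scope.

Definition simple_graph n (e : rel 'I_n) : Prop :=
  (forall x y, e x y = e y x) /\ (forall x, ~~ e x x).

Definition deg n (e : rel 'I_n) (v : 'I_n) : nat := #|[set u | e v u]|.

Definition codeg n (e : rel 'I_n) (v w : 'I_n) : nat :=
  #|[set u | e v u && e w u]|.

(* f : 'I_m.+1 -> 'I_n is a walk of length m: consecutive vertices adjacent *)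
Definition is_walk n (e : rel 'I_n) (m : nat) (f : {ffun 'I_m.+1 -> 'I_n}) : bool :=
  [forall j : 'I_m, e (f (widen_ord (leqnSn m) j)) (f (lift ord0 j))].

Definition walks_from n (e : rel 'I_n) (m : nat) (w : 'I_n) : {set {ffun 'I_m.+1 -> 'I_n}} :=
  [set f | is_walk e f && (f ord0 == w)].

Definition nwalks_from n (e : rel 'I_n) (m : nat) (w : 'I_n) : nat :=
  #|walks_from e m w|.

Definition nwalks n (e : rel 'I_n) (m : nat) (w v : 'I_n) : nat :=
  #|[set f in walks_from e m w | f ord_max == v]|.

(* P_w[X_m = v] for the simple random walk: sum over walks w -> v of length m
   of the product of the transition probabilities 1/d(x_j). *)
Definition walk_prob (R : realType) n (e : rel 'I_n) (m : nat) (w v : 'I_n) : R :=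
  \sum_(f in walks_from e m w | f ord_max == v)
     \prod_(j < m) ((deg e (f (widen_ord (leqnSn m) j)))%:R)^-1.

Definition bipartite n (e : rel 'I_n) : Prop :=
  exists c : 'I_n -> bool, forall x y, e x y -> c x != c y.

Definition dist_le n (e : rel 'I_n) (k : nat) (w v : 'I_n) : Prop :=
  exists m : nat, (m <= k)%N /\
    exists f : {ffun 'I_m.+1 -> 'I_n}, [/\ is_walk e f, f ord0 = w & f ord_max = v].

Definition diam_le n (e : rel 'I_n) (k : nat) : Prop :=
  forall v w, dist_le e k v w.

Definition adjmx (R : realType) n (e : rel 'I_n) : 'M[R]_n :=
  \matrix_(i, j) (e i j)%:R.

(* lam 0 >= lam 1 >= ... >= lam (n-1) are the eigenvalues of A with multiplicity
   (lambda_1, ..., lambda_n in the paper's notation). *)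
Definition adj_spectrum (R : realType) n (e : rel 'I_n) (lam : nat -> R) : Prop :=
  (forall i j : nat, (i <= j < n)%N -> lam j <= lam i) /\
  char_poly (adjmx R e) = \prod_(i < n) ('X - (lam i)%:P).

(* The class G_{k,n,p}, with explicit constants C3 C4 C5 C6 C8 for the O-terms
   of (iii),(iv),(v),(vi),(viii) and eps for the o(1) in (vii). *)
Definition in_class (R : realType) (k n : nat) (p : R)
    (C3 C4 C5 C6 C8 eps : R) (e : rel 'I_n) : Prop :=
  let nR := (n%:R : R) in
  let L := ln nR in
  [/\ simple_graph e, ~ bipartite e & diam_le e k] /\
  [/\
      (forall v, `|(deg e v)%:R - p * nR| <= C3 * Num.sqrt (p * nR * L)),
      `|(\sum_(v : 'I_n) deg e v)%:R - p * nR ^+ 2| <= C4 * Num.sqrt (p * nR ^+ 2 * L),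
      (forall v w, v != w ->
         `|(codeg e v w)%:R - p ^+ 2 * nR| <= C5 * Num.max (Num.sqrt (p ^+ 2 * nR * L)) L)
    & exists lam : nat -> R,
      [/\ adj_spectrum e lam,
          (exists phi : 'cV[R]_n,
             [/\ adjmx R e *m phi = lam 0%N *: phi,
                 \sum_(i < n) phi i ord0 ^+ 2 = 1
               & forall i, `|phi i ord0 - (Num.sqrt nR)^-1|
                     <= C6 * (L * Num.sqrt L / (Num.sqrt p * nR * ln (p * nR)))]),
          `|lam 0%N - p * nR| <= eps * (p * nR)
        & Num.max `|lam 1%N| `|lam n.-1| <= C8 * Num.sqrt (p * nR)]].

(* Main.v *)
Require Import Defs.
From HB Require Import structures.
From mathcomp Require Import all_boot all_order all_algebra.
From mathcomp Require Import all_classical all_reals all_analysis.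
Import Order.TTheory GRing.Theory Num.Theory.
Import numFieldNormedType.Exports.
From mathcomp Require Import ring lra.

Set Implicit Arguments. Unset Strict Implicit. Unset Printing Implicit Defensive.
Section Comb.
Variables (n : nat) (e : rel 'I_n).

Definition wcons m (w : 'I_n) (g : {ffun 'I_m.+1 -> 'I_n}) : {ffun 'I_m.+2 -> 'I_n} :=
  [ffun j => if unlift ord0 j is Some j' then g j' else w].
Definition wtail m (f : {ffun 'I_m.+2 -> 'I_n}) : {ffun 'I_m.+1 -> 'I_n} :=
  [ffun j => f (lift ord0 j)].

Lemma wcons0 m w (g : {ffun 'I_m.+1 -> 'I_n}) : wcons w g ord0 = w.
Proof. by rewrite ffunE unlift_none. Qed.
Lemma wconsS m w (g : {ffun 'I_m.+1 -> 'I_n}) j : wcons w g (lift ord0 j) = g j.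
Proof. by rewrite ffunE liftK. Qed.
Lemma wconsmax m w (g : {ffun 'I_m.+1 -> 'I_n}) : wcons w g ord_max = g ord_max.
Proof.
have -> : (ord_max : 'I_m.+2) = lift ord0 ord_max by apply: val_inj.
by rewrite wconsS.
Qed.
Lemma wcons_inj m w : injective (@wcons m w).
Proof.
move=> g1 g2 H; apply/ffunP=> j.
by rewrite -(wconsS w g1) -(wconsS w g2) H.
Qed.
Lemma wtailK m (f : {ffun 'I_m.+2 -> 'I_n}) : wcons (f ord0) (wtail f) = f.
Proof.
apply/ffunP=> j; rewrite ffunE.
by case: unliftP => [j'|] -> //; rewrite ffunE.
Qed.

Lemma widen_lift0 m (j : 'I_m) :
  widen_ord (leqnSn m.+1) (lift ord0 j) = lift ord0 (widen_ord (leqnSn m) j).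
Proof. by apply: val_inj. Qed.
Lemma widen0 m : widen_ord (leqnSn m.+1) ord0 = ord0.
Proof. by apply: val_inj. Qed.

Lemma is_walk_cons m w (g : {ffun 'I_m.+1 -> 'I_n}) :
  is_walk e (wcons w g) = e w (g ord0) && is_walk e g.
Proof.
apply/forallP/andP => [H|[H1 /forallP H2] j].
- split; first by have := H ord0; rewrite widen0 wcons0 wconsS.
  apply/forallP => j; have := H (lift ord0 j).
  by rewrite widen_lift0 !wconsS.
- case: (unliftP ord0 j) => [j'|] ->.
  + by rewrite widen_lift0 !wconsS.
  + by rewrite widen0 wcons0 wconsS.
Qed.

Lemma card_walks0 (P : pred 'I_n) u :
  #|[set f in walks_from e 0 u | P (f ord_max)]| = P u.
Proof.
have Hf : forall f : {ffun 'I_1 -> 'I_n},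
    (f \in walks_from e 0 u) && P (f ord_max) = (f == [ffun => u]) && P u.
  move=> f; rewrite finset.inE.
  have Hw : is_walk e f by apply/forallP => -[].
  rewrite Hw /=.
  have -> : (ord_max : 'I_1) = ord0 by apply: val_inj.
  have Hf : (f ord0 == u) = (f == [ffun => u]).
    apply/eqP/eqP => [<-|->]; last by rewrite ffunE.
    by apply/ffunP => j; rewrite ffunE (ord1 j).
  rewrite Hf; case: (eqVneq f [ffun => u]) => [->|ne] //=.
  by rewrite ffunE.
case Pu: (P u).
  rewrite (_ : [set f in walks_from e 0 u | P (f ord_max)] = [set [ffun => u]]) ?cards1 //.
  by apply/setP => f; rewrite finset.inE Hf Pu andbT finset.in_set1.
rewrite (_ : [set f in walks_from e 0 u | P (f ord_max)] = finset.set0) ?cards0 //.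
by apply/setP => f; rewrite finset.inE Hf Pu andbF finset.in_set0.
Qed.

Lemma card_walksS m (P : pred 'I_n) w :
  #|[set f in walks_from e m.+1 w | P (f ord_max)]| =
  (\sum_(u in [set u | e w u]) #|[set g in walks_from e m u | P (g ord_max)]|)%N.
Proof.
set A := [set f in walks_from e m.+1 w | P (f ord_max)].
rewrite -[LHS]sum1_card (partition_big (fun f : {ffun 'I_m.+2 -> 'I_n} => f (lift ord0 (ord0 : 'I_m.+1))) predT) //=.
rewrite (bigID (fun u => e w u)) /= [X in (_ + X)%N]big1 ?addn0; last first.
  move=> u Hu; apply: big_pred0 => f; rewrite !finset.inE.
  apply/negP => /andP[/andP[/andP[Hw /eqP H0] _] /eqP Hu'].
  have := Hw; rewrite -(wtailK f) is_walk_cons => /andP[Hwu _].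
  by move: Hwu; rewrite ffunE H0 Hu' (negbTE Hu).
apply: eq_big => [u|u]; first by rewrite finset.inE.
move=> Hwu; rewrite sum1dep_card -(card_imset _ (@wcons_inj m w)).
apply: eq_card => f; rewrite finset.inE; apply/idP/imsetP.
- move=> /andP[]; rewrite !finset.inE => /andP[/andP[Hw /eqP H0] HP] /eqP Hl.
  have Ef : f = wcons w (wtail f) by rewrite -H0 wtailK.
  exists (wtail f) => //.
  have : is_walk e (wcons w (wtail f)) by rewrite -Ef.
  rewrite is_walk_cons => /andP[_ Hw'].
  have HP' : P (wtail f ord_max) by rewrite -(wconsmax w) -Ef.
  by rewrite !finset.inE Hw' HP' ffunE Hl eqxx.
- move=> [g]; rewrite !finset.inE => /andP[/andP[Hg /eqP Hg0] HP] ->.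
  by rewrite is_walk_cons wcons0 wconsmax wconsS Hg0 Hwu Hg HP !eqxx.
Qed.

Local Open Scope ring_scope.

Lemma card_walks_bounds (R : realDomainType) (lo hi : R) :
  0 <= lo -> (forall v, lo <= (deg e v)%:R <= hi) ->
  forall m w, lo ^+ m <= (#|[set f in walks_from e m w | xpredT (f ord_max)]|)%:R <= hi ^+ m.
Proof.
move=> lo0 Hd; elim=> [|m IH] w.
  by rewrite (card_walks0 xpredT) !expr0 lexx.
rewrite (card_walksS _ xpredT) natr_sum; apply/andP; split.
  apply: (@le_trans _ _ (\sum_(u in [set u | e w u]) lo ^+ m)).
    rewrite sumr_const -mulr_natl exprS ler_wpM2r ?exprn_ge0 //.
    by have /andP[] := Hd w.
  by apply: ler_sum => u _; have /andP[] := IH u.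
apply: (@le_trans _ _ (\sum_(u in [set u | e w u]) hi ^+ m)).
  by apply: ler_sum => u _; have /andP[] := IH u.
rewrite sumr_const -mulr_natl exprS ler_wpM2r ?exprn_ge0 //.
  by case/andP: (Hd w) => H1 H2; apply: le_trans lo0 (le_trans H1 H2).
by case/andP: (Hd w).
Qed.

Lemma card_walks_end (R : realDomainType) (hi : R) v :
  0 <= hi -> (forall v, (deg e v)%:R <= hi) ->
  forall m w, (#|[set f in walks_from e m.+1 w | f ord_max == v]|)%:R <= hi ^+ m.
Proof.
move=> hi0 Hd; elim=> [|m IH] w.
  rewrite (card_walksS _ (fun x => x == v)) expr0.
  have : (\sum_(u in [set u | e w u]) #|[set g in walks_from e 0 u | g ord_max == v]| <= 1)%N.
    under eq_bigr => u _ do rewrite (card_walks0 (fun x => x == v)).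
    rewrite big_mkcond /= (bigD1 v) //= eqxx big1 ?addn0; first by case: ifP.
    by move=> u /negbTE ->; case: ifP.
  by rewrite -(ler_nat R).
rewrite (card_walksS _ (fun x => x == v)) natr_sum.
apply: (@le_trans _ _ (\sum_(u in [set u | e w u]) hi ^+ m)).
  by apply: ler_sum => u _; apply: IH.
by rewrite sumr_const -mulr_natl exprS ler_wpM2r ?exprn_ge0 //; apply: Hd.
Qed.

Lemma prod_constE (R : realType) (c : R) m : \prod_(j < m) c = c ^+ m.
Proof. by rewrite -(big_mkord xpredT) prodr_const_nat subn0. Qed.

Lemma stepA (R : realType) (lo hi : R) m v w :
  0 < lo -> (forall v, lo <= (deg e v)%:R <= hi) ->
  `|walk_prob R e m w v - (nwalks e m w v)%:R / (nwalks_from e m w)%:R|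
    <= (nwalks e m w v)%:R * ((lo ^+ m)^-1 - (hi ^+ m)^-1).
Proof.
move=> lo0 Hd.
have hi0 : 0 < hi by case/andP: (Hd w) => H1 H2; apply: lt_le_trans lo0 (le_trans H1 H2).
set A := walks_from e m w.
have HW : lo ^+ m <= (nwalks_from e m w)%:R <= hi ^+ m.
  have -> : nwalks_from e m w = #|[set f in walks_from e m w | xpredT (f ord_max)]|.
    by apply: eq_card => f; rewrite !finset.inE andbT.
  exact: card_walks_bounds (ltW lo0) Hd m w.
set W := (nwalks_from e m w)%:R in HW *.
have Hpi : forall f : {ffun 'I_m.+1 -> 'I_n},
    (hi ^+ m)^-1 <= \prod_(j < m) ((deg e (f (widen_ord (leqnSn m) j)))%:R)^-1 <= (lo ^+ m)^-1.
  move=> f; rewrite -!exprVn -!prod_constE; apply/andP; split; apply: ler_prod => j _;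
    case/andP: (Hd (f (widen_ord (leqnSn m) j))) => H1 H2.
  - rewrite invr_ge0 (ltW hi0) /= lef_pV2 ?posrE //; apply: lt_le_trans lo0 H1.
  - rewrite invr_ge0 ler0n /= lef_pV2 ?posrE //; apply: lt_le_trans lo0 H1.
have HWi : (hi ^+ m)^-1 <= W^-1 <= (lo ^+ m)^-1.
  have W0 : 0 < W by case/andP: HW => H1 _; apply: lt_le_trans H1; rewrite exprn_gt0.
  case/andP: HW => H1 H2.
  by rewrite !lef_pV2 ?posrE ?exprn_gt0 // H1 H2.
rewrite /walk_prob /nwalks -sum1dep_card natr_sum mulr_suml -sumrB.
apply: (le_trans (ler_norm_sum _ _ _)).
rewrite mulr_suml; apply: ler_sum => f _.
rewrite ler_norml !mul1r.
move: (Hpi f) HWi => /andP[a1 a2] /andP[b1 b2].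
apply/andP; split; lra.
Qed.
End Comb.

Section RealAux.
Local Open Scope ring_scope.
Lemma powdiff (R : realFieldType) (x y : R) m :
  0 <= x -> x <= y -> y ^+ m.+1 - x ^+ m.+1 <= (m.+1)%:R * y ^+ m * (y - x).
Proof.
move=> x0 xy; have y0 : 0 <= y by apply: le_trans xy.
elim: m => [|m IH]; first by rewrite !expr1 expr0 mulr1 mul1r.
have H : x ^+ m.+1 <= y ^+ m.+1 by apply: lerXn2r; rewrite ?nnegrE.
rewrite (exprS y m.+1) (exprS x m.+1) (exprS y m).
have -> : (m.+2)%:R = (m.+1)%:R + 1 :> R by rewrite mulrSr.
move: IH H; rewrite (exprS y m); set X := x ^+ m.+1; set Y := y ^+ m; set M := (m.+1)%:R.
have M0 : 0 <= M by rewrite ler0n.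
move=> IH H; nra.
Qed.

Lemma stepB (R : realType) (a d S : R) m' :
  0 < a -> 0 <= d -> 2 * d <= a -> 0 <= S -> S <= (a + d) ^+ m' ->
  S * (((a - d) ^+ m'.+1)^-1 - ((a + d) ^+ m'.+1)^-1)
    <= 4 * (m'.+1)%:R * 3 ^+ m' * d / a ^+ 2.
Proof.
move=> a0 d0 da S0 Sle.
set x := a - d; set y := a + d.
have x0 : 0 < x by rewrite /x; lra.
have xy : x <= y by rewrite /x /y; lra.
have y0 : 0 < y by rewrite /y; lra.
have y3x : y <= 3 * x by rewrite /x /y; lra.
have Hd : 0 <= (x ^+ m'.+1)^-1 - (y ^+ m'.+1)^-1.
  rewrite subr_ge0 lef_pV2 ?posrE ?exprn_gt0 //; apply: lerXn2r => //; rewrite nnegrE ltW //.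
rewrite -/y in Sle.
apply: (le_trans (ler_wpM2r Hd Sle)).
have E : y ^+ m' * ((x ^+ m'.+1)^-1 - (y ^+ m'.+1)^-1)
       = (y ^+ m'.+1 - x ^+ m'.+1) / (x ^+ m'.+1 * y).
  rewrite !exprS; field; rewrite ?mulf_neq0 ?expf_neq0 ?gt_eqF //.
rewrite E.
have P1 := @powdiff R x y m' (ltW x0) xy.
have P2 : y ^+ m' <= 3 ^+ m' * x ^+ m'.
  rewrite -exprMn; apply: lerXn2r => //; rewrite nnegrE ?mulr_ge0 ?ltW //.
have xyi : 0 < (x ^+ m'.+1 * y)^-1 by rewrite invr_gt0 mulr_gt0 ?exprn_gt0.
apply: (le_trans (ler_wpM2r (ltW xyi) P1)).
have yx0 : 0 <= y - x by lra.
have M0 : 0 <= (m'.+1)%:R :> R by rewrite ler0n.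
have Q : (m'.+1)%:R * y ^+ m' * (y - x) <= (m'.+1)%:R * (3 ^+ m' * x ^+ m') * (y - x).
  by rewrite ler_wpM2r // ler_wpM2l.
apply: (le_trans (ler_wpM2r (ltW xyi) Q)).
have E2 : (m'.+1)%:R * (3 ^+ m' * x ^+ m') * (y - x) / (x ^+ m'.+1 * y)
   = ((m'.+1)%:R * 3 ^+ m' * d) * (2 / (x * y)).
  rewrite /x /y exprS; field.
  by rewrite ?mulf_neq0 ?expf_neq0 ?gt_eqF //; rewrite -/x -/y.
have E3 : 4 * (m'.+1)%:R * 3 ^+ m' * d / a ^+ 2 = ((m'.+1)%:R * 3 ^+ m' * d) * (4 / a ^+ 2).
  by field; rewrite gt_eqF.
rewrite E2 E3; apply: ler_wpM2l; first by rewrite mulr_ge0 // mulr_ge0 // exprn_ge0.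
rewrite ler_pdivrMr ?mulr_gt0 // mulrAC ler_pdivlMr ?exprn_gt0 //.
rewrite /x /y; nra.
Qed.

Lemma sqrt_eq_aux (R : realType) (P Nn sp sn sL : R) :
  0 < sp -> 0 < sn -> P = sp ^+ 2 -> Nn = sn ^+ 2 ->
  sp * sn * sL / (P * Nn) ^+ 2 = sL / (P * sp * (Nn * sn)).
Proof. by move=> sp0 sn0 -> ->; field; rewrite ?mulf_neq0 ?expf_neq0 ?gt_eqF. Qed.
End RealAux.

Unset Implicit Arguments.
Local Open Scope classical_set_scope.
Local Open Scope ring_scope.

Theorem proposition6p3 (R : realType) (k i : nat) (p : nat -> R)
    (c C3 C4 C5 C6 C8 : R) (eps : nat -> R) (N0 : nat) :
  (2 <= k)%N -> 0 < c ->
  eps @ \oo --> (0 : R) ->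
  (forall n : nat, (N0 <= n)%N ->
     ln (n%:R : R) / (n%:R `^ ((k.-1)%:R / k%:R)) <= p n) ->
  (forall n : nat, (N0 <= n)%N ->
     p n <= 1 - c * (ln (n%:R : R) ^+ 4 / n%:R)) ->
  exists C : R, exists N : nat, forall n : nat, (N <= n)%N ->
    forall e : rel 'I_n, in_class k (p n) C3 C4 C5 C6 C8 (eps n) e ->
    forall v w : 'I_n,
      `|walk_prob R e i w v - (nwalks e i w v)%:R / (nwalks_from e i w)%:R|
        <= C * (Num.sqrt (ln (n%:R : R)) /
                (p n * Num.sqrt (p n) * (n%:R * Num.sqrt n%:R))).
Proof.
case: k => [//|k'] k2 c0 epsc plow pup.
have HM0 : 0 <= 4 * C3 ^+ 2 by rewrite mulr_ge0 // sqr_ge0.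
have HK := archi_boundP HM0.
set K := Num.Def.archi_bound _ in HK.
exists (4 * i%:R * 3 ^+ i * `|C3|), (maxn (maxn N0 2) (K ^ k'.+1)).
move=> n; rewrite !geq_max => /andP[/andP[nN0 n2] nK] e [[_ _ _] [Hdeg _ _ _]] v w.
have nR1 : 1 < (n%:R : R) by rewrite ltr1n.
have L0 : 0 < ln (n%:R : R) := ln_gt0 nR1.
have nR0 : 0 < (n%:R : R) by apply: lt_trans nR1.
have t0 : 0 < (n%:R : R) `^ (k'.+1%:R^-1) := powR_gt0 _ nR0.
have tk : ((n%:R : R) `^ (k'.+1%:R^-1)) ^+ k'.+1 = n%:R.
  rewrite -powR_mulrn ?ltW // -powRrM mulVf ?powRr1 ?ltW //.
have tk1 : (n%:R : R) `^ ((k'.+1.-1)%:R / k'.+1%:R) = ((n%:R : R) `^ (k'.+1%:R^-1)) ^+ k'.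
  by rewrite mulrC powRrM powR_mulrn // ltW.
have := plow n nN0; rewrite tk1 => pl.
move: t0 tk pl; set t := (n%:R : R) `^ (k'.+1%:R^-1) => t0 tk pl.
have tK : K%:R <= t.
  rewrite leNgt; apply/negP => Hlt.
  have H : t ^+ k'.+1 < K%:R ^+ k'.+1 by rewrite ltrXn2r // ltW.
  by move: H; rewrite tk -natrX ltr_nat ltnNge nK.
clear tk1 plow pup epsc.
move: Hdeg nR1 L0 nR0 tk pl.
set L := ln (n%:R : R); set nR := (n%:R : R); set pn := p n.
move=> Hdeg nR1 L0 nR0 tk pl.
have aLt : L * t <= pn * nR.
  have E : L / t ^+ k' * nR = L * t by rewrite -tk exprS; field; rewrite expf_neq0 // gt_eqF.
  by rewrite -E ler_wpM2r // ltW.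
have a0 : 0 < pn * nR by apply: lt_le_trans aLt; rewrite mulr_gt0.
have pn0 : 0 < pn by move: a0; rewrite pmulr_lgt0.
have aM : 4 * C3 ^+ 2 * L <= pn * nR.
  apply: le_trans aLt; rewrite [X in X <= _]mulrC ler_wpM2l ?(ltW L0) //; exact: le_trans (ltW HK) tK.
have s0 : 0 < Num.sqrt (pn * nR * L) by rewrite sqrtr_gt0 !mulr_gt0.
have ss : Num.sqrt (pn * nR * L) ^+ 2 = pn * nR * L by rewrite sqr_sqrtr // ltW // !mulr_gt0.
move: Hdeg s0 ss; set s := Num.sqrt _; set a := pn * nR => Hdeg s0 ss.
have C30 : 0 <= C3.
  have := le_trans (normr_ge0 _) (Hdeg w); by rewrite pmulr_lge0.
have d0 : 0 <= C3 * s by rewrite mulr_ge0 // ltW.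
have da : 2 * (C3 * s) <= a.
  have hd1 : 0 <= 2 * (C3 * s) by rewrite mulr_ge0.
  rewrite -(@ler_pXn2r _ 2) ?nnegrE ?(ltW a0) //.
  have E : (2 * (C3 * s)) ^+ 2 = 4 * C3 ^+ 2 * L * a by rewrite !exprMn ss; ring.
  by rewrite E [a ^+ 2]expr2 ler_pM2r.
have Hb : forall u, a - C3 * s <= (deg e u)%:R <= a + C3 * s.
  by move=> u; have := Hdeg u; rewrite ler_distl.
have a0a : 0 < a by [].
have lo0 : 0 < a - C3 * s by lra.
have HA := @stepA n e R _ _ i v w lo0 Hb.
apply: (le_trans HA).
have S0 : 0 <= (nwalks e i w v)%:R :> R by rewrite ler0n.
have X0 : 0 <= Num.sqrt L / (pn * Num.sqrt pn * (nR * Num.sqrt nR)).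
  by rewrite divr_ge0 ?sqrtr_ge0 // !mulr_ge0 ?sqrtr_ge0 // ltW.
case: i HA S0 => [|m'] HA S0.
  rewrite !expr0 invr1 subrr mulr0.
  by apply: mulr_ge0 X0; rewrite !mulr_ge0 // ?normr_ge0 ?exprn_ge0.
have hi0 : 0 <= a + C3 * s by rewrite addr_ge0 // ltW.
have Hhi : forall u, (deg e u)%:R <= a + C3 * s by move=> u; case/andP: (Hb u).
have Sle := @card_walks_end n e R (a + C3 * s) v hi0 Hhi m' w.
have HB := stepB a0a d0 da S0 Sle.
apply: (le_trans HB).
have Es : s = Num.sqrt pn * Num.sqrt nR * Num.sqrt L.
  by rewrite /s !sqrtrM ?mulr_ge0 // ltW.
have EX : s / a ^+ 2 = Num.sqrt L / (pn * Num.sqrt pn * (nR * Num.sqrt nR)).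
  by rewrite Es /a sqrt_eq_aux ?sqrtr_gt0 ?sqr_sqrtr // ltW.
move: X0 EX; set X := Num.sqrt L / _ => X0 EX.
have L1 : 4 * (m'.+1)%:R * 3 ^+ m' * (C3 * s) / a ^+ 2 = (4 * (m'.+1)%:R * C3 * X) * 3 ^+ m'.
  by rewrite -EX; field; rewrite gt_eqF.
have R1 : 4 * (m'.+1)%:R * 3 ^+ m'.+1 * `|C3| * X = (4 * (m'.+1)%:R * C3 * X) * 3 ^+ m'.+1.
  by rewrite ger0_norm //; ring.
rewrite L1 R1; apply: ler_wpM2l; first by apply: mulr_ge0 X0; rewrite !mulr_ge0.
have : 0 <= 3 ^+ m' :> R by rewrite exprn_ge0.
rewrite exprS; lra.

Qed.
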